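(* Let ${}_{\mathfrak Y}\mathfrak B_{\mathfrak X}$ be a left-fibrant graph of bisets, and let $\dagger\in\mathfrak Y$, $*\in\mathfrak X$ be vertices. For any vertex $x\in\mathfrak X$ and any $p\in\pi_1(\mathfrak X,x,* )$ let \[S(p)=\bigcup_{z\in\rho^{-1}(x)}\pi_1(\mathfrak Y,\dagger,\lambda(z))\otimes_{\widehat G_{\lambda(z)}}\widehat B_z\otimes_{\widehat G_{\rho(z)}}p,\] viewed as a left $\pi_1(\mathfrak Y,\dagger)$-set and as a subset of the set $S$ whose quotient by the equivalence relation $\sim$ defining the fundamental biset is $\pi_1(\mathfrak B,\dagger,* )$. Then for all such $p_1,p_2$, the relation $\sim$ restricted to $S(p_1)\times S(p_2)$ is the graph of an isomorphism of left $\pi_1(\mathfrak Y,\dagger)$-sets $S(p_1)\to S(p_2)$.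
   Context: Graphs and graphs of groups. A graph is a set $\mathfrak X=V\sqcup E$ with maps $x\mapsto x^-$, $x\mapsto\bar x$ such that $\bar{\bar x}=x$, $x^-\in V$, $x=x^-\iff x=\bar x\iff x\in V$; $x^+=(\bar x)^-$. Graph morphisms commute with $\bar{\ }$ and $^-$ (may send edges to vertices); simplicial if edges go to edges. A graph of groups is a connected graph with groups $G_x$ and homomorphisms $g\mapsto g^-\colon G_x\to G_{x^-}$, $g\mapsto\bar g\colon G_x\to G_{\bar x}$, with $G_x\to G_{\bar x}\to G_x$ the identity and both maps the identity for vertices; $g^+=(\bar g)^-$. Fundamental groupoid $\pi_1(\mathfrak X)$: objects $V$, generated by the $x\in\mathfrak X$ (from $x^-$ to $x^+$) and elements of the $G_v$, relations of the $G_v$, $v=1\in G_v$, $x\bar x=1$, $g^-x=xg^+$. $\pi_1(\mathfrak X,v,w)$: morphisms from $v$ to $w$. $\widehat G_x$: image of $G_x$ in $\pi_1(\mathfrak X)$. Graphs of bisets. A $\mathfrak Y$-$\mathfrak X$ graph of bisets: graph $\mathfrak B$, graph morphisms $\lambda\colon\mathfrak B\to\mathfrak Y$, $\rho\colon\mathfrak B\to\mathfrak X$, $G_{\lambda(z)}$-$G_{\rho(z)}$-bisets $B_z$, and congruences $b\mapsto b^-\colon B_z\to B_{z^-}$, $b\mapsto\bar b\colon B_z\to B_{\bar z}$ (i.e. $(hbg)^-=h^-b^-g^-$, etc.), with $B_z\to B_{\bar z}\to B_z$ the identity and both maps the identity for vertices; $b^+=(\bar b)^-$. $\widehat B_z=\widehat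 G_{\lambda(z)}\otimes_{G_{\lambda(z)}}B_z\otimes_{G_{\rho(z)}}\widehat G_{\rho(z)}$. Let $S=\bigsqcup_{z\in V(\mathfrak B)}\pi_1(\mathfrak Y,\dagger,\lambda(z))\otimes_{\widehat G_{\lambda(z)}}\widehat B_z\otimes_{\widehat G_{\rho(z)}}\pi_1(\mathfrak X,\rho(z),* )$, and let $\sim$ be the equivalence relation on $S$ generated by $q\otimes b^-\otimes p\sim q\lambda(z)\otimes b^+\otimes\overline{\rho(z)}p$ for edges $z\in\mathfrak B$, $b\in B_z$, $q\in\pi_1(\mathfrak Y,\dagger,\lambda(z)^-)$, $p\in\pi_1(\mathfrak X,\rho(z)^-,* )$ ($\lambda(z),\overline{\rho(z)}$ as groupoid morphisms, trivial if vertices); $S/{\sim}$ is the fundamental biset $\pi_1(\mathfrak B,\dagger,* )$. Left-fibrant: $\rho$ simplicial and for every vertex $v\in\mathfrak B$ and edge $f\in\mathfrak X$ with $f^-=\rho(v)$, the map $\bigsqcup_{e\in\rho^{-1}(f),\,e^-=v}G_{\lambda(v)}\otimes_{G_{\lambda(e)}}B_e\to B_v$, $g\otimes b\mapsto gb^-$, is an isomorphism of $G_{\lambda(v)}$-$G_f$-bisets. *)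

(* Defs.v *)
From Stdlib Require Import List Relations.
Import ListNotations.
Set Implicit Arguments.

(* Graphs (Serre style, vertices = fixed points of x |-> x^-)          *)
Record Graph := {
  gcar :> Type;
  gbar : gcar -> gcar;
  gminus : gcar -> gcar;
  gbar_inv : forall x, gbar (gbar x) = x;
  gminus_vertex : forall x, gminus (gminus x) = gminus x;
  gvertex_iff : forall x, x = gminus x <-> x = gbar x
}.

Definition isV (X : Graph) (x : X) : Prop := gminus X x = x.
Definition gplus (X : Graph) (x : X) : X := gminus X (gbar X x).
Arguments isV {X} x.
Arguments gplus {X} x.

Inductive epath (X : Graph) : X -> list X -> X -> Prop :=
| ep_nil (v : X) : isV v -> epath X v [] v
| ep_cons (x : X) l w : epath X (gplus x) l w -> epath X (gminus X x) (x :: l) w.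
Arguments epath {X} _ _ _.

(* Graphs of groups.  The family (G_x)_{x in X} is encoded by its total
   space GE with the index map gidx : GE -> X, i.e. G_x = {g | gidx g = x}. *)
Record GraphOfGroups := {
  ggr :> Graph;
  GE : Type;
  gidx : GE -> ggr;
  gmul : GE -> GE -> GE;
  gone : ggr -> GE;
  ginv : GE -> GE;
  gdown : GE -> GE;
  gflip : GE -> GE;
  gone_idx : forall x, gidx (gone x) = x;
  gmul_idx : forall a b, gidx a = gidx b -> gidx (gmul a b) = gidx a;
  ginv_idx : forall a, gidx (ginv a) = gidx a;
  gmulA : forall a b c, gidx a = gidx b -> gidx b = gidx c ->
            gmul (gmul a b) c = gmul a (gmul b c);
  gmul1l : forall a, gmul (gone (gidx a)) a = a;
  gmul1r : forall a, gmul a (gone (gidx a)) = a;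
  gmulVl : forall a, gmul (ginv a) a = gone (gidx a);
  gmulVr : forall a, gmul a (ginv a) = gone (gidx a);
  gdown_idx : forall g, gidx (gdown g) = gminus ggr (gidx g);
  gflip_idx : forall g, gidx (gflip g) = gbar ggr (gidx g);
  gdown_mul : forall a b, gidx a = gidx b -> gdown (gmul a b) = gmul (gdown a) (gdown b);
  gflip_mul : forall a b, gidx a = gidx b -> gflip (gmul a b) = gmul (gflip a) (gflip b);
  gflip_inv : forall g, gflip (gflip g) = g;
  g_vertex_id : forall g, isV (gidx g) -> gdown g = g /\ gflip g = g;
  g_connected : forall v w : ggr, isV v -> isV w -> exists l, epath v l w
}.

Definition gplusG (G : GraphOfGroups) (g : GE G) : GE G := gdown G (gflip G g).

(* Fundamental groupoid pi_1(X): words in the generators x in X and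
   g in G_v (v vertex), modulo the defining relations.                 *)
Inductive letter (G : GraphOfGroups) : Type :=
| LE : ggr G -> letter G
| LG : GE G -> letter G.
Arguments LE {G} _.
Arguments LG {G} _.

Inductive walk (G : GraphOfGroups) : ggr G -> list (letter G) -> ggr G -> Prop :=
| walk_nil (v : ggr G) : isV v -> walk v [] v
| walk_E (x : ggr G) l w : walk (gplus x) l w -> walk (gminus _ x) (LE x :: l) w
| walk_G g l w : walk (gidx G g) l w -> walk (gidx G g) (LG g :: l) w.

Inductive base_rel (G : GraphOfGroups) : list (letter G) -> list (letter G) -> Prop :=
| br_mul g h : base_rel [LG g; LG h] [LG (gmul G g h)]
| br_one v : base_rel [LG (gone G v)] []
| br_vertex v : isV v -> base_rel [LE v] [LG (gone G v)]
| br_inv x : base_rel [LE x; LE (gbar _ x)] []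
| br_edge g : base_rel [LG (gdown G g); LE (gidx G g)]
                       [LE (gidx G g); LG (gplusG G g)].

Inductive pstep (G : GraphOfGroups) (v w : ggr G) : list (letter G) -> list (letter G) -> Prop :=
| ps_intro p q l r : base_rel l r ->
    walk v (p ++ l ++ q) w -> walk v (p ++ r ++ q) w ->
    pstep v w (p ++ l ++ q) (p ++ r ++ q).

Definition peq (G : GraphOfGroups) (v w : ggr G) : relation (list (letter G)) :=
  clos_refl_sym_trans _ (pstep v w).

Definition graph_morphism {A C : Graph} (f : A -> C) : Prop :=
  (forall z, f (gbar A z) = gbar C (f z)) /\ (forall z, f (gminus A z) = gminus C (f z)).

Definition simplicial {A C : Graph} (f : A -> C) : Prop :=
  forall z, ~ isV z -> ~ isV (f z).

(* Graphs of bisets.  As above, the family (B_z) is encoded by its total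
   space BE with index map bidx; lact / ract are the left G_{lam z}- and
   right G_{rho z}-actions on B_z.                                       *)
Record GraphOfBisets (Y X : GraphOfGroups) := {
  bgr : Graph;
  lam : bgr -> ggr Y;
  rho : bgr -> ggr X;
  lam_morph : graph_morphism lam;
  rho_morph : graph_morphism rho;
  BE : Type;
  bidx : BE -> bgr;
  lact : GE Y -> BE -> BE;
  ract : BE -> GE X -> BE;
  bdown : BE -> BE;
  bflip : BE -> BE;
  lact_idx : forall h b, gidx Y h = lam (bidx b) -> bidx (lact h b) = bidx b;
  ract_idx : forall b k, gidx X k = rho (bidx b) -> bidx (ract b k) = bidx b;
  lact_one : forall b, lact (gone Y (lam (bidx b))) b = b;
  lact_mul : forall h1 h2 b, gidx Y h1 = lam (bidx b) -> gidx Y h2 = lam (bidx b) ->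
               lact (gmul Y h1 h2) b = lact h1 (lact h2 b);
  ract_one : forall b, ract b (gone X (rho (bidx b))) = b;
  ract_mul : forall b k1 k2, gidx X k1 = rho (bidx b) -> gidx X k2 = rho (bidx b) ->
               ract b (gmul X k1 k2) = ract (ract b k1) k2;
  lract_comm : forall h b k, gidx Y h = lam (bidx b) -> gidx X k = rho (bidx b) ->
               lact h (ract b k) = ract (lact h b) k;
  bdown_idx : forall b, bidx (bdown b) = gminus _ (bidx b);
  bflip_idx : forall b, bidx (bflip b) = gbar _ (bidx b);
  bdown_lact : forall h b, gidx Y h = lam (bidx b) -> bdown (lact h b) = lact (gdown Y h) (bdown b);
  bdown_ract : forall b k, gidx X k = rho (bidx b) -> bdown (ract b k) = ract (bdown b) (gdown X k);
  bflip_lact : forall h b, gidx Y h = lam (bidx b) -> bflip (lact h b) = lact (gflip Y h) (bflip b);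
  bflip_ract : forall b k, gidx X k = rho (bidx b) -> bflip (ract b k) = ract (bflip b) (gflip X k);
  bflip_inv : forall b, bflip (bflip b) = b;
  b_vertex_id : forall b, isV (bidx b) -> bdown b = b /\ bflip b = b
}.

Arguments bgr {Y X} _.
Arguments lam {Y X} _ _.
Arguments rho {Y X} _ _.
Arguments BE {Y X} _.
Arguments bidx {Y X} _ _.
Arguments lact {Y X} _ _ _.
Arguments ract {Y X} _ _ _.
Arguments bdown {Y X} _ _.
Arguments bflip {Y X} _ _.

Section Bisets.
Variables (Y X : GraphOfGroups) (B : GraphOfBisets Y X).

Definition bplus (b : BE B) : BE B := bdown B (bflip B b).

(* For a vertex v of B and an edge f of X with f^- = rho v,
   the domain of the map is  G_{lam v} (x)_{G_{lam e}} B_e  summed over the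
   edges e with rho e = f, e^- = v; an element g (x) b is represented by the
   pair (g, b) with b in B_e (so e = bidx b).                            *)
Definition fib_dom (v : bgr B) (f : ggr X) (gb : GE Y * BE B) : Prop :=
  gidx Y (fst gb) = lam B v /\ rho B (bidx B (snd gb)) = f /\
  gminus _ (bidx B (snd gb)) = v.

Inductive fib_step (v : bgr B) (f : ggr X) : GE Y * BE B -> GE Y * BE B -> Prop :=
| fs_intro g h b : fib_dom v f (gmul Y g (gdown Y h), b) -> fib_dom v f (g, lact B h b) ->
    gidx Y h = lam B (bidx B b) ->
    fib_step v f (gmul Y g (gdown Y h), b) (g, lact B h b).

Definition fib_eq (v : bgr B) (f : ggr X) := clos_refl_sym_trans _ (fib_step v f).

Definition fib_map (gb : GE Y * BE B) : BE B := lact B (fst gb) (bdown B (snd gb)).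

Definition left_fibrant : Prop :=
  simplicial (rho B) /\
  forall (v : bgr B) (f : ggr X), isV v -> ~ isV f -> gminus _ f = rho B v ->
    (forall c, bidx B c = v -> exists gb, fib_dom v f gb /\ fib_map gb = c) /\
    (forall gb1 gb2, fib_dom v f gb1 -> fib_dom v f gb2 ->
       fib_map gb1 = fib_map gb2 -> fib_eq v f gb1 gb2).

(* The set S.  An element q (x) b (x) p of
     pi_1(Y,dag,lam z) (x) hat B_z (x) pi_1(X, rho z, star),  z = bidx b a vertex,
   is represented by the raw triple (q, b, p).                          *)
Definition triple := (list (letter Y) * BE B * list (letter X))%type.

Definition inS (dag : ggr Y) (star : ggr X) (s : triple) : Prop :=
  let '(q, b, p) := s in
  isV (bidx B b) /\ walk dag q (lam B (bidx B b)) /\ walk (rho B (bidx B b)) p star.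

(* generating relation of the tensor product (equality in S) *)
Inductive tstep (dag : ggr Y) (star : ggr X) : triple -> triple -> Prop :=
| ts_q q q' b p : inS dag star (q, b, p) -> peq dag (lam B (bidx B b)) q q' ->
    inS dag star (q', b, p) -> tstep dag star (q, b, p) (q', b, p)
| ts_p q b p p' : inS dag star (q, b, p) -> peq (rho B (bidx B b)) star p p' ->
    inS dag star (q, b, p') -> tstep dag star (q, b, p) (q, b, p')
| ts_l q h b p : gidx Y h = lam B (bidx B b) -> inS dag star (q ++ [LG h], b, p) ->
    tstep dag star (q ++ [LG h], b, p) (q, lact B h b, p)
| ts_r q b k p : gidx X k = rho B (bidx B b) -> inS dag star (q, ract B b k, p) ->
    tstep dag star (q, ract B b k, p) (q, b, LG k :: p).

Definition teq dag star : relation triple := clos_refl_sym_trans _ (tstep dag star).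

Inductive sim_step (dag : ggr Y) (star : ggr X) : triple -> triple -> Prop :=
| ss_edge q b p : ~ isV (bidx B b) ->
    inS dag star (q, bdown B b, p) ->
    inS dag star (q ++ [LE (lam B (bidx B b))], bplus b, LE (gbar _ (rho B (bidx B b))) :: p) ->
    sim_step dag star (q, bdown B b, p)
                      (q ++ [LE (lam B (bidx B b))], bplus b, LE (gbar _ (rho B (bidx B b))) :: p).

Definition sim dag star : relation triple :=
  clos_refl_sym_trans _ (fun s t => tstep dag star s t \/ sim_step dag star s t).

Definition inSp (dag : ggr Y) (star : ggr X) (x : ggr X) (p : list (letter X)) (s : triple) : Prop :=
  inS dag star s /\
  exists q b, isV (bidx B b) /\ rho B (bidx B b) = x /\
              inS dag star (q, b, p) /\ teq dag star s (q, b, p).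

Definition act (g : list (letter Y)) (s : triple) : triple :=
  let '(q, b, p) := s in (g ++ q, b, p).

End Bisets.

Arguments inS {Y X} B dag star s.
Arguments inSp {Y X} B dag star x p s.
Arguments teq {Y X} B dag star _ _.
Arguments sim {Y X} B dag star _ _.
Arguments act {Y X} B g s.
Arguments fib_eq {Y X} B v f _ _.
Arguments fib_dom {Y X} B v f gb.
Arguments fib_map {Y X} B gb.

(* Main.v *)
Require Import Defs.
From Stdlib Require Import List Relations ClassicalEpsilon.
Import ListNotations.
Set Implicit Arguments.

Lemma crst_inv {A} (R : relation A) (I : A -> Prop) (Q : relation A) :
  (forall x y, R x y -> I x -> I y) -> (forall x y, R x y -> I y -> I x) ->
  (forall x, Q x x) -> (forall x y, Q x y -> Q y x) -> (forall x y z, Q x y -> Q y z -> Q x z) ->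
  (forall x y, R x y -> I x -> Q x y) ->
  forall x y, clos_refl_sym_trans _ R x y -> I x -> Q x y.
Proof.
  intros H1 H2 Qr Qs Qt HR x y H.
  cut ((I x <-> I y) /\ (I x -> Q x y)); [tauto|].
  induction H as [x y H| x | x y H [IH1 IH2] | x y z H [IH1 IH2] H' [IH3 IH4]].
  - split; [split; eauto|eauto].
  - split; [tauto|auto].
  - split; [tauto|]. intro; apply Qs; apply IH2; tauto.
  - split; [tauto|]. intro; eapply Qt; [apply IH2; tauto| apply IH4; tauto].
Qed.

Section GG.
Variable G : GraphOfGroups.
Implicit Types (v w u : ggr G) (l : list (letter G)).

Lemma isV_minus (x : ggr G) : isV (gminus G x).
Proof. unfold isV. apply gminus_vertex. Qed.

Lemma isV_bar (x : ggr G) : isV x -> gbar G x = x.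
Proof. unfold isV. intro H. symmetry. apply gvertex_iff. auto. Qed.

Lemma isV_bar_inv (x : ggr G) : isV (gbar G x) -> isV x.
Proof. unfold isV. intro H. symmetry in H. apply gvertex_iff in H.
  rewrite gbar_inv in H. symmetry. apply gvertex_iff. symmetry; auto. Qed.

Lemma walk_E' (x : ggr G) v l w : v = gminus G x -> walk (gplus x) l w -> walk v (LE x :: l) w.
Proof. intros ->; apply walk_E. Qed.
Lemma walk_G' g v l w : v = gidx G g -> walk v l w -> walk v (LG g :: l) w.
Proof. intros ->; apply walk_G. Qed.

Lemma walk_start v l w : walk v l w -> isV v.
Proof. induction 1; auto. apply isV_minus. Qed.
Lemma walk_end v l w : walk v l w -> isV w.
Proof. induction 1; auto. Qed.

Lemma walk_app v l w l' u : walk v l w -> walk w l' u -> walk v (l ++ l') u.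
Proof. induction 1; simpl; intros; auto; constructor; auto. Qed.

Lemma walk_split v l l' u : walk v (l ++ l') u -> exists w, walk v l w /\ walk w l' u.
Proof.
  revert v. induction l as [|a l IH]; simpl; intros v H.
  - exists v. split; auto. constructor. eapply walk_start; eauto.
  - inversion H as [|x l0 w0 H3|g l0 w0 H3]; subst.
    + destruct (IH _ H3) as (w' & H5 & H6). exists w'. split; auto. constructor; auto.
    + destruct (IH _ H3) as (w' & H5 & H6). exists w'. split; auto. constructor; auto.
Qed.

Lemma walk_det v l w w' : walk v l w -> walk v l w' -> w = w'.
Proof.
  intro H; revert w'; induction H; intros w' H'; inversion H'; subst; auto.
Qed.

Lemma walk_nil_inv v w : walk v [] w -> v = w.
Proof. intro H; inversion H; auto. Qed.

Lemma walk_one_E (x : ggr G) v w : walk v [LE x] w -> v = gminus G x /\ w = gplus x.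
Proof. intro H; inversion H as [|x0 l0 w0 H3|]; subst. apply walk_nil_inv in H3. auto. Qed.
Lemma walk_one_G g v w : walk v [LG g] w -> v = gidx G g /\ w = gidx G g.
Proof. intro H; inversion H as [| |g0 l0 w0 H3]; subst. apply walk_nil_inv in H3. auto. Qed.

Lemma peq_walk v w l l' : peq v w l l' -> (walk v l w <-> walk v l' w).
Proof.
  induction 1 as [? ? H| | |]; try tauto.
  destruct H; tauto.
Qed.

Lemma peq_step P L R Q l r v w : l = P ++ L ++ Q -> r = P ++ R ++ Q -> base_rel L R ->
  walk v l w -> walk v r w -> peq v w l r.
Proof. intros -> -> H1 H2 H3. apply rst_step. constructor; auto. Qed.

Lemma peq_base L R v w : base_rel L R -> walk v L w -> walk v R w -> peq v w L R.
Proof. intros HB H1 H2. pose proof (ps_intro (v:=v)(w:=w) [] [] HB) as K; simpl in K; rewrite !app_nil_r in K.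
  apply rst_step, K; auto. Qed.

Lemma peq_ctx v w l l' u z a b : peq v w l l' -> walk u a v -> walk w b z ->
  peq u z (a ++ l ++ b) (a ++ l' ++ b).
Proof.
  intros H Ha Hb. induction H as [x y H| | |].
  - destruct H as [P Q L R HB H1 H2]. apply rst_step.
    replace (a ++ (P ++ L ++ Q) ++ b) with ((a ++ P) ++ L ++ (Q ++ b)) by (rewrite <- !app_assoc; auto).
    replace (a ++ (P ++ R ++ Q) ++ b) with ((a ++ P) ++ R ++ (Q ++ b)) by (rewrite <- !app_assoc; auto).
    constructor; auto.
    + rewrite <- !app_assoc. eapply walk_app; eauto. rewrite !app_assoc. eapply walk_app; eauto.
      rewrite <- !app_assoc; auto.
    + rewrite <- !app_assoc. eapply walk_app; eauto. rewrite !app_assoc. eapply walk_app; eauto.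
      rewrite <- !app_assoc; auto.
  - apply rst_refl.
  - apply rst_sym; auto.
  - eapply rst_trans; eauto.
Qed.

Lemma peq_trans v w a b c : peq v w a b -> peq v w b c -> peq v w a c.
Proof. intros; eapply rst_trans; eauto. Qed.
Lemma peq_sym v w a b : peq v w a b -> peq v w b a.
Proof. intros; apply rst_sym; auto. Qed.

Definition inv_letter (a : letter G) : letter G :=
  match a with LE x => LE (gbar G x) | LG g => LG (ginv G g) end.
Definition inv l := rev (map inv_letter l).

Lemma ginv_inv g : ginv G (ginv G g) = g.
Proof.
  transitivity (gmul G (ginv G (ginv G g)) (gmul G (ginv G g) g)).
  - rewrite gmulVl. rewrite <- (ginv_idx G g), <- (ginv_idx G (ginv G g)). rewrite gmul1r. auto.
  - rewrite <- gmulA by (rewrite !ginv_idx; auto). rewrite gmulVl, ginv_idx, gmul1l. auto.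
Qed.

Lemma inv_inv l : inv (inv l) = l.
Proof.
  unfold inv. rewrite map_rev, rev_involutive, map_map.
  induction l as [|[x|g] l IH]; simpl; f_equal; auto. rewrite gbar_inv; auto. rewrite ginv_inv; auto.
Qed.

Lemma inv_cons a l : inv (a :: l) = inv l ++ [inv_letter a].
Proof. reflexivity. Qed.

Lemma walk_inv v l w : walk v l w -> walk w (inv l) v.
Proof.
  induction 1.
  - constructor; auto.
  - rewrite inv_cons. eapply walk_app; eauto. simpl. apply walk_E'.
    + unfold gplus. auto.
    + unfold gplus. rewrite gbar_inv. constructor. apply isV_minus.
  - rewrite inv_cons. eapply walk_app; eauto. simpl. apply walk_G'.
    + rewrite ginv_idx; auto.
    + constructor. eapply walk_start; eauto.
Qed.

Lemma peq_inv_r v l w : walk v l w -> peq v v (l ++ inv l) [].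
Proof.
  induction 1.
  - simpl. apply rst_refl.
  - rewrite inv_cons. simpl.
    apply peq_trans with ([LE x] ++ [] ++ [inv_letter (LE x)]).
    + rewrite app_assoc. change (peq (gminus G x) (gminus G x) ([LE x] ++ (l ++ inv l) ++ [inv_letter (LE x)]) ([LE x] ++ [] ++ [inv_letter (LE x)])).
      eapply peq_ctx; eauto.
      * apply walk_E; constructor; eapply walk_start; eauto.
      * simpl. apply walk_E'. unfold gplus; auto. unfold gplus. rewrite gbar_inv. constructor. apply isV_minus.
    + simpl. apply peq_base; [apply br_inv| |].
      * apply walk_E. apply walk_E'. unfold gplus; auto. unfold gplus. rewrite gbar_inv. constructor. apply isV_minus.
      * constructor. apply isV_minus.
  - rewrite inv_cons. simpl.
    apply peq_trans with ([LG g] ++ [] ++ [inv_letter (LG g)]).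
    + rewrite app_assoc. change (peq (gidx G g) (gidx G g) ([LG g] ++ (l ++ inv l) ++ [inv_letter (LG g)]) ([LG g] ++ [] ++ [inv_letter (LG g)])).
      eapply peq_ctx; eauto.
      * apply walk_G; constructor; eapply walk_start; eauto.
      * simpl. apply walk_G'. rewrite ginv_idx; auto. constructor. eapply walk_start; eauto.
    + simpl. assert (HV : isV (gidx G g)) by (eapply walk_start; eauto).
      apply peq_trans with [LG (gone G (gidx G g))].
      * rewrite <- (gmulVr G g). apply peq_base; [apply br_mul| |].
        -- apply walk_G. apply walk_G'. rewrite ginv_idx; auto. constructor; auto.
        -- apply walk_G'. rewrite gmul_idx; auto. rewrite ginv_idx; auto. constructor; auto.
      * apply peq_base; [apply br_one| |].
        -- apply walk_G'. rewrite gone_idx. auto. constructor; auto.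
        -- constructor; auto.
Qed.

End GG.


Lemma isV_minusG (Gr : Graph) (x : Gr) : isV (gminus Gr x).
Proof. unfold isV. apply gminus_vertex. Qed.

Lemma walk_nil' (G : GraphOfGroups) (v w : ggr G) : v = w -> isV v -> walk v [] w.
Proof. intros ->; apply walk_nil. Qed.

Ltac wk := rewrite <- ?app_assoc; simpl; repeat first [ eassumption | eapply walk_app; [eassumption|] | apply walk_E' | apply walk_G' | apply walk_nil' | apply isV_minusG ].

Lemma peq_ctx_base (G : GraphOfGroups) (u z v w : ggr G) a L R b l r :
  l = a ++ L ++ b -> r = a ++ R ++ b -> base_rel L R -> walk u a v -> walk v L w -> walk v R w -> walk w b z -> peq u z l r.
Proof.
  intros -> -> HB Ha H1 H2 Hb. apply (peq_ctx (v:=v) (w:=w)); auto. apply peq_base; auto.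
Qed.

Lemma peq_suffix (G : GraphOfGroups) (v w z : ggr G) l l' b : isV v -> peq v w l l' -> walk w b z ->
  peq v z (l ++ b) (l' ++ b).
Proof. intros Hv H Hb. apply (peq_ctx (a := []) H); auto. constructor; auto. Qed.

Lemma peq_prefix (G : GraphOfGroups) (u v w : ggr G) a l l' : peq v w l l' -> walk u a v ->
  isV w -> peq u w (a ++ l) (a ++ l').
Proof. intros H Ha Hw. rewrite <- (app_nil_r l), <- (app_nil_r l'). apply (peq_ctx (b := []) H); auto. constructor; auto. Qed.

Section Bis.
Variables (Y X : GraphOfGroups) (B : GraphOfBisets Y X) (dag : ggr Y).

Lemma lam_bar z : lam B (gbar _ z) = gbar _ (lam B z). Proof. apply (proj1 (lam_morph B)). Qed.
Lemma lam_minus z : lam B (gminus _ z) = gminus _ (lam B z). Proof. apply (proj2 (lam_morph B)). Qed.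
Lemma rho_bar z : rho B (gbar _ z) = gbar _ (rho B z). Proof. apply (proj1 (rho_morph B)). Qed.
Lemma rho_minus z : rho B (gminus _ z) = gminus _ (rho B z). Proof. apply (proj2 (rho_morph B)). Qed.

Lemma isV_lam z : isV z -> isV (lam B z).
Proof. unfold isV. intro H. rewrite <- lam_minus, H. auto. Qed.

Ltac norm := unfold gplus, bplus, gplusG in *;
  repeat (rewrite ?lam_bar, ?lam_minus, ?rho_bar, ?rho_minus, ?bdown_idx, ?bflip_idx, ?gbar_inv,
    ?gminus_vertex, ?gdown_idx, ?gflip_idx, ?gone_idx, ?ginv_idx, ?bflip_inv, ?gflip_inv in *).

Ltac fin := norm; auto using isV_minusG, isV_lam; try (rewrite gmul_idx by (norm; congruence)); norm; try congruence.

Definition bpair := (list (letter Y) * BE B)%type.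
Definition good (t : bpair) := isV (bidx B (snd t)) /\ walk dag (fst t) (lam B (bidx B (snd t))).
Definition pos (t : bpair) := rho B (bidx B (snd t)).

Inductive estep : bpair -> bpair -> Prop :=
| es_q q q' c : good (q,c) -> good (q',c) -> peq dag (lam B (bidx B c)) q q' -> estep (q,c) (q',c)
| es_l q h c : gidx Y h = lam B (bidx B c) -> good (q ++ [LG h], c) -> estep (q ++ [LG h], c) (q, lact B h c).

Definition E := clos_refl_sym_trans _ estep.

Lemma E_refl t : E t t. Proof. apply rst_refl. Qed.
Lemma E_sym t t' : E t t' -> E t' t. Proof. apply rst_sym. Qed.
Lemma E_trans t1 t2 t3 : E t1 t2 -> E t2 t3 -> E t1 t3. Proof. apply rst_trans. Qed.

Lemma good_l q h c : good (q ++ [LG h], c) -> gidx Y h = lam B (bidx B c) -> good (q, lact B h c).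
Proof.
  unfold good; simpl. intros [H1 H2] Hh. rewrite lact_idx by auto. split; auto.
  destruct (walk_split _ _ H2) as (w & Hw1 & Hw2). apply walk_one_G in Hw2. destruct Hw2 as [-> _].
  congruence.
Qed.

Lemma estep_good t t' : estep t t' -> good t /\ good t'.
Proof. destruct 1; auto. split; auto. apply good_l; auto. Qed.

Lemma estep_bidx t t' : estep t t' -> bidx B (snd t) = bidx B (snd t').
Proof. destruct 1; simpl; auto. rewrite lact_idx; auto. Qed.

Lemma E_bidx t t' : E t t' -> bidx B (snd t) = bidx B (snd t').
Proof. induction 1; try congruence. apply estep_bidx; auto. Qed.

Lemma E_good t t' : E t t' -> good t -> good t'.
Proof.
  intro H. cut (good t <-> good t'); [tauto|].
  induction H as [x y H| | |]; try tauto. apply estep_good in H; tauto.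
Qed.

Lemma E_pos t t' : E t t' -> pos t' = pos t.
Proof. intro H. unfold pos. rewrite (E_bidx H). auto. Qed.

Lemma E_teq t t' star p : E t t' -> good t -> walk (pos t) p star ->
  teq B dag star (t, p) (t', p).
Proof.
  intros H Hg Hw.
  apply (@crst_inv _ estep (fun t => good t /\ walk (pos t) p star)
                  (fun x y => teq B dag star (x, p) (y, p))); auto.
  - intros x y Hxy [Hx Hx']. split. apply (estep_good Hxy). unfold pos. rewrite <- (estep_bidx Hxy). auto.
  - intros x y Hxy [Hx Hx']. split. apply (estep_good Hxy). unfold pos. rewrite (estep_bidx Hxy). auto.
  - intros; apply rst_refl.
  - intros; apply rst_sym; auto.
  - intros; eapply rst_trans; eauto.
  - intros x y Hxy [Hx Hx']. apply rst_step. destruct Hxy as [q q' c Hg1 Hg2 Hp| q h c Hh Hg1].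
    + apply ts_q; auto.
      * destruct Hg1; split; auto.
      * destruct Hg2; split; auto.
    + apply ts_l; auto. destruct Hg1; split; auto.
Qed.


Hypothesis HLF : left_fibrant B.

Definition decomp (f : ggr X) (c : BE B) (gb : GE Y * BE B) :=
  fib_dom B (bidx B c) f gb /\ fib_map B gb = c.

Definition res (q : list (letter Y)) (gb : GE Y * BE B) : bpair :=
  (q ++ [LG (fst gb); LE (lam B (bidx B (snd gb)))], bplus B (snd gb)).

Definition pushE (f : ggr X) (t : bpair) : bpair :=
  match excluded_middle_informative (exists gb, decomp f (snd t) gb) with
  | left H => res (fst t) (proj1_sig (constructive_indefinite_description _ H))
  | right _ => t
  end.

Definition push (a : letter X) (t : bpair) : bpair :=
  match a with
  | LG k => (fst t, ract B (snd t) k)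
  | LE f => if excluded_middle_informative (isV f) then t else pushE f t
  end.

Definition fold (l : list (letter X)) (t : bpair) : bpair := fold_left (fun t a => push a t) l t.

Lemma fold_app l l' t : fold (l ++ l') t = fold l' (fold l t).
Proof. unfold fold. apply fold_left_app. Qed.
Lemma fold_cons a l t : fold (a :: l) t = fold l (push a t).
Proof. reflexivity. Qed.

Lemma LF_simp z : ~ isV z -> ~ isV (rho B z).
Proof. apply (proj1 HLF). Qed.

Lemma decomp_exists c f : isV (bidx B c) -> ~ isV f -> gminus _ f = rho B (bidx B c) ->
  exists gb, decomp f c gb.
Proof.
  intros H1 H2 H3. destruct (proj2 HLF _ _ H1 H2 H3) as [Hs _].
  destruct (Hs c eq_refl) as [gb [? ?]]. exists gb. split; auto.
Qed.

Lemma decomp_inj c f gb1 gb2 : isV (bidx B c) -> ~ isV f -> gminus _ f = rho B (bidx B c) ->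
  decomp f c gb1 -> decomp f c gb2 -> fib_eq B (bidx B c) f gb1 gb2.
Proof.
  intros H1 H2 H3 [Ha Hb] [Hc Hd]. destruct (proj2 HLF _ _ H1 H2 H3) as [_ Hi].
  apply Hi; auto. congruence.
Qed.

Lemma res_good q v f gb : isV v -> walk dag q (lam B v) -> fib_dom B v f gb ->
  good (res q gb) /\ pos (res q gb) = gplus f.
Proof.
  destruct gb as [g b]. intros Hv Hq (H1 & H2 & H3). simpl in *. subst v f.
  unfold good, pos, res; simpl. norm. split; [split|].
  - apply isV_minusG.
  - wk; fin.
  - congruence.
Qed.

Lemma fib_step_E q v f gb gb' : isV v -> walk dag q (lam B v) -> fib_step B v f gb gb' ->
  E (res q gb) (res q gb').
Proof.
  intros Hv Hq Hs. destruct Hs as [g h b (H1 & H2 & H3) (H4 & H5 & H6) Hh]. simpl in *. subst v f.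
  assert (Hbl : bidx B (lact B h b) = bidx B b) by (apply lact_idx; auto).
  rewrite Hbl in *.
  assert (Hgh : gidx Y (gdown Y h) = lam B (gminus _ (bidx B b))) by (norm; congruence).
  assert (Hpl : bplus B (lact B h b) = lact B (gplusG Y h) (bplus B b)).
  { unfold bplus, gplusG. rewrite bflip_lact by auto. rewrite bdown_lact; auto. norm. congruence. }
  unfold res; simpl. rewrite Hbl, Hpl.
  assert (Hgp : gidx Y (gplusG Y h) = lam B (bidx B (bplus B b))) by (norm; congruence).
  apply rst_trans with ((q ++ [LG g; LE (lam B (bidx B b))]) ++ [LG (gplusG Y h)], bplus B b);
    [apply rst_step| apply rst_step; apply es_l; auto].
  - apply es_q.
    + split; simpl. unfold bplus; norm; apply isV_minusG.
      rewrite gmul_idx in H1 by congruence. wk; fin.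
    + split; simpl. unfold bplus; norm; apply isV_minusG.
      wk; fin.
    + rewrite gmul_idx in H1 by congruence.
      apply peq_trans with (q ++ [LG g; LG (gdown Y h); LE (lam B (bidx B b))]).
      * apply peq_sym. eapply (peq_ctx_base (a := q) (b := [LE (lam B (bidx B b))]) (L := [LG g; LG (gdown Y h)]) (R := [LG (gmul Y g (gdown Y h))])).
        -- simpl; rewrite <- ?app_assoc; reflexivity.
        -- simpl; rewrite <- ?app_assoc; reflexivity.
        -- apply br_mul.
        -- eassumption.
        -- wk; fin.
        -- wk; fin.
        -- wk; fin.
      * assert (HB := br_edge Y h). rewrite Hh in HB.
        eapply (peq_ctx_base (a := q ++ [LG g]) (b := []) (L := [LG (gdown Y h); LE (lam B (bidx B b))]) (R := [LE (lam B (bidx B b)); LG (gplusG Y h)])).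
        -- simpl; rewrite <- ?app_assoc; reflexivity.
        -- simpl; rewrite <- ?app_assoc; reflexivity.
        -- exact HB.
        -- wk; fin.
        -- wk; fin.
        -- wk; fin.
        -- wk; fin.
  - rewrite <- app_assoc. simpl. split; simpl. unfold bplus; norm; apply isV_minusG.
    wk; fin.
Qed.


Lemma fib_eq_E q v f gb gb' : isV v -> walk dag q (lam B v) -> fib_eq B v f gb gb' ->
  fib_dom B v f gb -> E (res q gb) (res q gb').
Proof.
  intros Hv Hq H Hd.
  apply (@crst_inv _ (fib_step B v f) (fib_dom B v f) (fun x y => E (res q x) (res q y))); auto.
  - intros x y []; auto.
  - intros x y []; auto.
  - intros; apply E_refl.
  - intros; apply E_sym; auto.
  - intros; eapply E_trans; eauto.
  - intros x y Hxy _. eapply fib_step_E; eauto.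
Qed.

Lemma pushE_cases f t : good t -> ~ isV f -> gminus _ f = pos t ->
  exists gb, decomp f (snd t) gb /\ pushE f t = res (fst t) gb.
Proof.
  intros [Hv Hq] Hf Hm. unfold pushE.
  destruct (excluded_middle_informative _) as [H|H].
  - destruct (constructive_indefinite_description _ H) as [gb Hgb]. simpl. exists gb; auto.
  - exfalso. apply H. apply decomp_exists; auto.
Qed.

Lemma decomp_good t f gb : good t -> decomp f (snd t) gb ->
  good (res (fst t) gb) /\ pos (res (fst t) gb) = gplus f.
Proof. intros [Hv Hq] [Hd _]. eapply res_good; eauto. Qed.

Lemma pushE_spec f t gb : good t -> ~ isV f -> gminus _ f = pos t -> decomp f (snd t) gb ->
  E (pushE f t) (res (fst t) gb).
Proof.
  intros Hg Hf Hm Hd. destruct (pushE_cases Hg Hf Hm) as (gb0 & Hd0 & ->).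
  destruct Hg as [Hv Hq].
  eapply fib_eq_E; [eauto|eauto| apply decomp_inj; eauto | apply Hd0].
Qed.

Lemma push_good t a u : good t -> walk (pos t) [a] u -> good (push a t) /\ pos (push a t) = u.
Proof.
  intros Hg Hw. destruct a as [f|k]; simpl.
  - apply walk_one_E in Hw. destruct Hw as [H1 H2].
    destruct (excluded_middle_informative (isV f)) as [Hf|Hf].
    + split; auto. subst u. unfold gplus. rewrite (@isV_bar X f Hf). rewrite H1. unfold isV in Hf. auto.
    + destruct (pushE_cases Hg Hf (eq_sym H1)) as (gb & Hd & ->).
      destruct (decomp_good Hg Hd). split; congruence.
  - apply walk_one_G in Hw. destruct Hw as [H1 H2]. destruct Hg as [Hv Hq].
    unfold good, pos in *; simpl in *. rewrite ract_idx by congruence. split; auto; congruence.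
Qed.

Lemma fold_good l t u : good t -> walk (pos t) l u -> good (fold l t) /\ pos (fold l t) = u.
Proof.
  revert t. induction l as [|a l IH]; intros t Hg Hw.
  - apply walk_nil_inv in Hw. simpl. auto.
  - rewrite fold_cons. change (a :: l) with ([a] ++ l) in Hw.
    destruct (walk_split _ _ Hw) as (w & H1 & H2).
    destruct (push_good Hg H1) as [Hg' Hp]. apply IH; auto. congruence.
Qed.

Lemma res_peq q q' v f gb : isV v -> walk dag q (lam B v) -> walk dag q' (lam B v) ->
  peq dag (lam B v) q q' -> fib_dom B v f gb -> E (res q gb) (res q' gb).
Proof.
  intros Hv Hq Hq' Hp Hd. destruct (res_good Hv Hq Hd) as [G1 _]. destruct (res_good Hv Hq' Hd) as [G2 _].
  apply rst_step. unfold res. apply es_q; auto.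
  destruct gb as [g b]. destruct Hd as (H1 & H2 & H3). simpl in *. subst v f.
  apply peq_suffix with (w := lam B (gminus _ (bidx B b))); auto.
  - eapply walk_start; eauto.
  - wk; fin.
Qed.


Lemma push_estep t t' a u : estep t t' -> walk (pos t) [a] u -> E (push a t) (push a t').
Proof.
  intros Hs Hw. destruct (estep_good Hs) as [Gt Gt'].
  destruct a as [f|k]; simpl.
  - apply walk_one_E in Hw. destruct Hw as [H1 H2].
    destruct (excluded_middle_informative (isV f)) as [Hf|Hf].
    + apply rst_step; auto.
    + assert (H1' : gminus X f = pos t') by (unfold pos; rewrite <- (estep_bidx Hs); auto).
      destruct (pushE_cases Gt Hf (eq_sym H1)) as (gb & Hd & ->).
      destruct (pushE_cases Gt' Hf H1') as (gb' & Hd' & ->).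
      destruct Hs as [q q' c G1 G2 Hp | q h c Hh G1]; simpl in *.
      * eapply E_trans. 2: { apply res_peq with (v := bidx B c) (f := f); [apply G1 | apply G1 | apply G2 | auto | apply (proj1 Hd')]. }
        destruct G1 as [Hv Hq]. eapply fib_eq_E; [eauto|eauto| apply decomp_inj; eauto | apply (proj1 Hd)].
      * destruct gb as [g bb]. destruct Hd as ((D1 & D2 & D3) & D4). simpl in *.
        assert (Hbc : bidx B (lact B h c) = bidx B c) by (apply lact_idx; auto).
        assert (Hc : bidx B c = gminus _ (bidx B bb)) by congruence.
        assert (Hdh : decomp f (lact B h c) (gmul Y h g, bb)).
        { split; [split; [|split]|]; simpl.
          - rewrite gmul_idx; congruence.
          - auto.
          - congruence.
          - unfold fib_map; simpl. rewrite lact_mul; try (rewrite bdown_idx; congruence). unfold fib_map in D4; simpl in D4; rewrite D4; auto. }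
        destruct Gt' as [Hv Hq]. simpl in Hv, Hq.
        assert (Hvc : isV (bidx B c)) by (rewrite <- Hbc; auto).
        apply E_trans with (res q (gmul Y h g, bb)).
        2: { eapply fib_eq_E; [exact Hv | exact Hq | apply decomp_inj; eauto | apply (proj1 Hdh)]. }
        destruct (decomp_good (t := (q ++ [LG h], c)) (f := f) (gb := (g, bb)) G1) as [R1 _].
        { split; [split; [|split]|]; auto. }
        destruct (decomp_good (t := (q, lact B h c)) (f := f) (gb := (gmul Y h g, bb)) (conj Hv Hq) Hdh) as [R2 _].
        unfold res in R1, R2; simpl in R1, R2. rewrite <- app_assoc in R1. simpl in R1.
        apply rst_step. unfold res; simpl. rewrite <- app_assoc. simpl.
        apply es_q; auto.
        apply peq_prefix with (v := lam B (bidx B c)).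
        -- eapply (peq_ctx_base (a := []) (b := [LE (lam B (bidx B bb))]) (L := [LG h; LG g]) (R := [LG (gmul Y h g)])).
           ++ reflexivity.
           ++ reflexivity.
           ++ apply br_mul.
           ++ apply walk_nil. pose proof (walk_end Hq) as HH; rewrite Hbc in HH; exact HH.
           ++ wk; fin.
           ++ wk; fin.
           ++ wk; rewrite ?Hc; fin.
        -- destruct G1 as [_ G1]. simpl in G1. destruct (walk_split _ _ G1) as (w & W1 & W2).
           apply walk_one_G in W2. destruct W2 as [-> _]. congruence.
        -- fin.
  - apply walk_one_G in Hw. destruct Hw as [H1 H2].
    unfold pos in H1.
    destruct Hs as [q q' c G1 G2 Hp | q h c Hh G1]; simpl in *.
    + apply rst_step. apply es_q.
      * destruct G1; split; simpl in *; rewrite ract_idx; auto.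
      * destruct G2; split; simpl in *; rewrite ract_idx; auto.
      * rewrite ract_idx; auto.
    + apply rst_step. rewrite <- lract_comm by congruence. apply es_l.
      * rewrite ract_idx; auto.
      * destruct G1; split; simpl in *; rewrite ract_idx; auto.
Qed.


Lemma push_E t t' a u : E t t' -> good t -> walk (pos t) [a] u -> E (push a t) (push a t').
Proof.
  intros H Hg Hw.
  apply (@crst_inv _ estep (fun x => good x /\ walk (pos x) [a] u) (fun x y => E (push a x) (push a y))); auto.
  - intros x y Hxy [Hx Hx']. split. apply (estep_good Hxy). unfold pos. rewrite <- (estep_bidx Hxy). auto.
  - intros x y Hxy [Hx Hx']. split. apply (estep_good Hxy). unfold pos. rewrite (estep_bidx Hxy). auto.
  - intros; apply E_refl.
  - intros; apply E_sym; auto.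
  - intros; eapply E_trans; eauto.
  - intros x y Hxy [_ Hx']. eapply push_estep; eauto.
Qed.

Lemma fold_E l t t' u : E t t' -> good t -> walk (pos t) l u -> E (fold l t) (fold l t').
Proof.
  revert t t'. induction l as [|a l IH]; intros t t' H Hg Hw; auto.
  rewrite !fold_cons.
  change (a :: l) with ([a] ++ l) in Hw.
  destruct (walk_split _ _ Hw) as (w & H1 & H2).
  destruct (push_good Hg H1) as [Hg' Hp].
  apply IH.
  - eapply push_E; eauto.
  - auto.
  - congruence.
Qed.

Lemma fold_base L R t u : base_rel L R -> good t -> walk (pos t) L u ->
  E (fold L t) (fold R t).
Proof.
  intros HB Hg HL. destruct t as [q c]. pose proof Hg as [Hv Hq]. simpl in Hv, Hq.
  unfold pos in HL; simpl in HL.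
  destruct HB as [g h | v | v Hvv | x | g0].
  - inversion HL as [| |g1 l1 w1 HL1]; subst. inversion HL1 as [| |g2 l2 w2 HL2]; subst.
    unfold fold; simpl. rewrite <- ract_mul by congruence. apply E_refl.
  - apply walk_one_G in HL. destruct HL as [HL _]. rewrite gone_idx in HL.
    unfold fold; simpl. rewrite <- HL, ract_one. apply E_refl.
  - apply walk_one_E in HL. destruct HL as [HL _].
    unfold fold; simpl. destruct (excluded_middle_informative (isV v)) as [_|Hn]; [|tauto].
    unfold isV in Hvv. rewrite Hvv in HL. rewrite <- HL, ract_one. apply E_refl.
  - unfold fold; simpl.
    change [LE x; LE (gbar X x)] with ([LE x] ++ [LE (gbar X x)]) in HL.
    destruct (walk_split _ _ HL) as (w0 & W1 & W2). apply walk_one_E in W1. destruct W1 as [H0 W1].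
    destruct (excluded_middle_informative (isV x)) as [Hx|Hx].
    + rewrite (@isV_bar X x Hx). destruct (excluded_middle_informative (isV x)); [|tauto]. apply E_refl.
    + destruct (excluded_middle_informative (isV (gbar X x))) as [Hx'|Hx'].
      { exfalso. apply Hx, isV_bar_inv; auto. }
      destruct (pushE_cases (t := (q, c)) Hg Hx (eq_sym H0)) as ([g bb] & Hd & ->).
      destruct (decomp_good Hg Hd) as [Hg1 Hp1]. simpl in *.
      destruct Hd as ((D1 & D2 & D3) & D4). simpl in *.
      eapply E_trans.
      { apply (pushE_spec (gb := (gone Y (lam B (bidx B (bplus B bb))), bflip B bb))); [auto|auto| |].
        - rewrite Hp1. unfold gplus. auto.
        - split; [split; [|split]|]; simpl.
          + rewrite gone_idx. auto.
          + rewrite bflip_idx, rho_bar. congruence.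
          + rewrite bflip_idx. unfold bplus. rewrite bdown_idx, bflip_idx. auto.
          + unfold fib_map; simpl. apply lact_one. }
      unfold res; simpl.
      replace (bplus B (bflip B bb)) with (bdown B bb) by (unfold bplus; rewrite bflip_inv; auto).
      assert (Hc : bidx B c = gminus _ (bidx B bb)) by congruence.
      rewrite Hc, lam_minus in D1. rewrite Hc, lam_minus in Hq.
      eapply rst_trans; [apply rst_step| apply rst_step].
      2: { rewrite <- D4. unfold fib_map. simpl. apply (es_l q g (c := bdown B bb)).
           - rewrite bdown_idx. rewrite lam_minus. congruence.
           - split; simpl. rewrite bdown_idx; apply isV_minusG. wk; rewrite ?Hc; fin. }
      apply es_q.
      * destruct Hg1 as [Hg1 Hg2]. split; simpl in *. rewrite bdown_idx; apply isV_minusG.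
        wk; rewrite ?Hc; fin.
      * split; simpl. rewrite bdown_idx; apply isV_minusG. wk; rewrite ?Hc; fin.
      * rewrite <- !app_assoc. simpl. apply peq_prefix with (v := lam B (bidx B c)); auto.
        -- apply peq_trans with [LG g; LE (lam B (bidx B bb)); LE (gbar _ (lam B (bidx B bb)))].
           ++ eapply (peq_ctx_base (a := [LG g; LE (lam B (bidx B bb))]) (b := [LE (lam B (bidx B (bflip B bb)))]) (L := [LG (gone Y (lam B (bidx B (bplus B bb))))]) (R := [])).
              ** reflexivity.
              ** rewrite bflip_idx, lam_bar. reflexivity.
              ** apply br_one.
              ** wk; rewrite ?Hc; fin.
              ** wk; rewrite ?Hc; fin.
              ** wk; rewrite ?Hc; fin.
              ** wk; rewrite ?Hc; fin.
           ++ eapply (peq_ctx_base (a := [LG g]) (b := []) (L := [LE (lam B (bidx B bb)); LE (gbar _ (lam B (bidx B bb)))]) (R := [])).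
              ** reflexivity.
              ** reflexivity.
              ** apply br_inv.
              ** wk; rewrite ?Hc; fin.
              ** wk; rewrite ?Hc; fin.
              ** wk; rewrite ?Hc; fin.
              ** wk; rewrite ?Hc; fin.
        -- rewrite Hc, lam_minus; auto.
        -- rewrite bdown_idx, <- Hc. apply isV_lam; auto.
  - change [LG (gdown X g0); LE (gidx X g0)] with ([LG (gdown X g0)] ++ [LE (gidx X g0)]) in HL.
    destruct (walk_split _ _ HL) as (w0 & W1 & W2). apply walk_one_G in W1. destruct W1 as [H0 W1].
    unfold fold; simpl.
    destruct (excluded_middle_informative (isV (gidx X g0))) as [Hf|Hf].
    + destruct (g_vertex_id X g0 Hf) as [Hd1 Hd2]. unfold gplusG. rewrite Hd2, Hd1. apply E_refl.
    + rewrite gdown_idx in H0.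
      destruct (pushE_cases (t:=(q,c)) Hg Hf (eq_sym H0)) as ([g bb] & Hd & ->).
      destruct Hd as ((D1 & D2 & D3) & D4). simpl in *.
      assert (Hc : bidx B c = gminus _ (bidx B bb)) by congruence.
      assert (Hk : gidx X (gdown X g0) = rho B (bidx B c)) by (rewrite gdown_idx; congruence).
      assert (Hk2 : gidx X g0 = rho B (bidx B bb)) by congruence.
      eapply E_trans.
      { apply (pushE_spec (t := (q, ract B c (gdown X g0))) (gb := (g, ract B bb g0))).
        - split; simpl; rewrite ract_idx; auto.
        - auto.
        - unfold pos; simpl; rewrite ract_idx; auto.
        - split; [split;[|split]|]; simpl.
          + rewrite ract_idx; congruence.
          + rewrite ract_idx; congruence.
          + rewrite !ract_idx; congruence.
          + unfold fib_map; simpl. rewrite bdown_ract by auto. rewrite lract_comm.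
            * unfold fib_map in D4. simpl in D4. rewrite D4. auto.
            * rewrite bdown_idx. congruence.
            * rewrite bdown_idx, gdown_idx, rho_minus. congruence. }
      unfold res; simpl. rewrite ract_idx by auto. unfold bplus at 1. rewrite bflip_ract by auto.
      rewrite bdown_ract.
      * apply E_refl.
      * rewrite bflip_idx, gflip_idx, rho_bar. congruence.
Qed.


Lemma fold_peq v w l l' t : peq v w l l' -> good t -> pos t = v -> walk v l w ->
  E (fold l t) (fold l' t).
Proof.
  intros H Hg Hp Hw.
  apply (@crst_inv _ (pstep v w) (fun l => walk v l w) (fun x y => E (fold x t) (fold y t))); auto.
  - intros x y []; auto.
  - intros x y []; auto.
  - intros; apply E_refl.
  - intros; apply E_sym; auto.
  - intros; eapply E_trans; eauto.
  - intros x y Hs _. destruct Hs as [P Q L R HB H1 H2].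
    destruct (walk_split _ _ H1) as (w1 & W1 & W2).
    destruct (walk_split _ _ W2) as (w2 & W3 & W4).
    rewrite !fold_app.
    destruct (fold_good (l := P) (u := w1) Hg ltac:(rewrite Hp; exact W1)) as [G1 P1].
    destruct (fold_good (l := L) (u := w2) G1 ltac:(rewrite P1; exact W3)) as [G2 P2].
    apply fold_E with w; auto. 2: rewrite P2; auto.
    eapply fold_base; eauto. rewrite P1; eauto.
Qed.

End Bis.


Section Main.
Variables (Y X : GraphOfGroups) (B : GraphOfBisets Y X) (dag : ggr Y) (star : ggr X).
Hypothesis HLF : left_fibrant B.

Ltac norm := unfold gplus, bplus, gplusG in *;
  repeat (rewrite ?lam_bar, ?lam_minus, ?rho_bar, ?rho_minus, ?bdown_idx, ?bflip_idx, ?gbar_inv,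
    ?gminus_vertex, ?gdown_idx, ?gflip_idx, ?gone_idx, ?ginv_idx, ?bflip_inv, ?gflip_inv in *).
Ltac fin := norm; auto using isV_minusG, isV_lam; try (rewrite gmul_idx by (norm; congruence)); norm; try congruence.

Lemma isV_bar_inv_G (Gr : Graph) (x : Gr) : isV (gbar Gr x) -> isV x.
Proof. unfold isV. intro H. symmetry in H. apply gvertex_iff in H.
  rewrite gbar_inv in H. symmetry. apply gvertex_iff. symmetry; auto. Qed.

Notation E := (@E Y X B dag).
Notation good := (@good Y X B dag).
Notation pos := (@pos Y X B).
Notation fold := (@fold Y X B).
Notation push := (@push Y X B).

Definition Phi (s : triple B) : bpair B := fold (snd s) (fst s).

Lemma tstep_inS s s' : @tstep Y X B dag star s s' -> inS B dag star s /\ inS B dag star s'.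
Proof.
  destruct 1 as [q q' b p H1 H2 H3| q b p p' H1 H2 H3| q h b p Hh H1| q b k p Hk H1]; auto.
  - split; auto. destruct H1 as (A1 & A2 & A3). split; [|split]; rewrite ?lact_idx by auto; auto.
    destruct (walk_split _ _ A2) as (w & W1 & W2). apply walk_one_G in W2. destruct W2 as [-> _]. congruence.
  - split; auto. destruct H1 as (A1 & A2 & A3). rewrite ract_idx in * by auto.
    split; [|split]; auto. apply walk_G'; auto.
Qed.

Lemma tstep_Phi s s' : @tstep Y X B dag star s s' -> E (Phi s) (Phi s').
Proof.
  destruct 1 as [q q' b p H1 H2 H3| q b p p' H1 H2 H3| q h b p Hh H1| q b k p Hk H1]; unfold Phi; simpl.
  - destruct H1 as (A1 & A2 & A3). destruct H3 as (A4 & A5 & A6).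
    apply (fold_E HLF) with star; auto.
    + apply rst_step. apply es_q; auto; split; auto.
    + split; auto.
  - destruct H1 as (A1 & A2 & A3). eapply (fold_peq HLF); eauto. split; auto.
  - destruct H1 as (A1 & A2 & A3). apply (fold_E HLF) with star; auto.
    + apply rst_step. apply es_l; auto. split; auto.
    + split; auto.
  - apply E_refl.
Qed.

Lemma sim_step_Phi s s' : @sim_step Y X B dag star s s' -> E (Phi s) (Phi s').
Proof.
  destruct 1 as [q b p Hz H1 H2]. unfold Phi; simpl.
  set (z := bidx B b) in *.
  assert (Hf : ~ isV (gbar X (rho B z))).
  { intro H. apply isV_bar_inv in H. revert H. apply (LF_simp HLF); auto. }
  destruct H1 as (A1 & A2 & A3). destruct H2 as (A4 & A5 & A6).
  apply (fold_E HLF) with star; [apply E_sym | split; auto | auto].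
  unfold push. destruct (excluded_middle_informative (isV (gbar X (rho B z)))) as [Hv|_]; [tauto|].
  eapply E_trans.
  { apply (pushE_spec HLF (gb := (gone Y (lam B (bidx B (bplus B b))), bflip B b))); [split; auto|auto| |].
    - unfold pos; simpl. unfold z. fin.
    - split; [split; [|split]|]; simpl.
      + rewrite gone_idx. auto.
      + rewrite bflip_idx, rho_bar. auto.
      + rewrite bflip_idx. unfold bplus. rewrite bdown_idx, bflip_idx. auto.
      + unfold fib_map; simpl. apply lact_one. }
  unfold res; simpl.
  replace (bplus B (bflip B b)) with (bdown B b) by (unfold bplus; rewrite bflip_inv; auto).
  apply rst_step. apply es_q.
  - split; simpl. rewrite bdown_idx; apply isV_minusG. wk; fin.
  - split; auto.
  - rewrite <- !app_assoc. simpl. rewrite <- (app_nil_r q) at 2.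
    apply peq_prefix with (v := lam B (gminus _ z)); auto.
    + apply peq_trans with [LE (lam B z); LE (gbar _ (lam B z))].
      * eapply (peq_ctx_base (a := [LE (lam B z)]) (b := [LE (lam B (bidx B (bflip B b)))]) (L := [LG (gone Y (lam B (bidx B (bplus B b))))]) (R := [])).
        -- reflexivity.
        -- rewrite bflip_idx, lam_bar. reflexivity.
        -- apply br_one.
        -- wk; unfold z; fin.
        -- wk; unfold z; fin.
        -- wk; unfold z; fin.
        -- wk; unfold z; fin.
      * apply peq_base. apply br_inv.
        -- wk; unfold z; fin.
        -- wk; unfold z; fin.
    + rewrite bdown_idx in A2. auto.
    + rewrite bdown_idx. fin.
Qed.


Lemma inS_intro q b p : isV (bidx B b) -> walk dag q (lam B (bidx B b)) -> walk (rho B (bidx B b)) p star ->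
  inS B dag star (q, b, p).
Proof. intros; repeat split; auto. Qed.

Lemma sim_Phi s s' : sim B dag star s s' -> inS B dag star s -> E (Phi s) (Phi s').
Proof.
  intros H Hs.
  apply (@crst_inv _ (fun s s' => @tstep Y X B dag star s s' \/ @sim_step Y X B dag star s s')
     (inS B dag star) (fun x y => E (Phi x) (Phi y))); auto.
  - intros x y [Hxy|Hxy] _. apply (tstep_inS Hxy). destruct Hxy; auto.
  - intros x y [Hxy|Hxy] _. apply (tstep_inS Hxy). destruct Hxy; auto.
  - intros; apply E_refl.
  - intros; apply E_sym; auto.
  - intros; eapply E_trans; eauto.
  - intros x y [Hxy|Hxy] _. apply tstep_Phi; auto. apply sim_step_Phi; auto.
Qed.

Lemma teq_sim s s' : teq B dag star s s' -> sim B dag star s s'.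
Proof. induction 1; [apply rst_step; left; auto|apply rst_refl|apply rst_sym; auto|eapply rst_trans; eauto]. Qed.

Lemma rho_isV z : isV z -> isV (rho B z).
Proof. unfold isV. intro H. rewrite <- rho_minus, H. auto. Qed.

Lemma push_sim t a p : good t -> walk (pos t) (a :: p) star -> sim B dag star (t, a :: p) (push a t, p).
Proof.
  destruct t as [q c]. intros [Hv Hq] Hw. unfold pos in Hw; simpl in *.
  change (a :: p) with ([a] ++ p) in Hw.
  destruct (walk_split _ _ Hw) as (w & W1 & W2).
  destruct a as [f|k].
  - apply walk_one_E in W1. destruct W1 as [H1 ->]. simpl.
    destruct (excluded_middle_informative (isV f)) as [Hf|Hf].
    + assert (Hff : gplus f = f) by (unfold gplus; rewrite (@isV_bar X f Hf); auto).
      rewrite Hff in W2.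
      apply rst_step; left. apply ts_p.
      * apply inS_intro; auto; apply walk_E'; auto.
      * assert (Hf' : gminus X f = f) by exact Hf. rewrite H1, Hf'.
        apply peq_trans with (LG (gone X f) :: p).
        -- eapply (peq_ctx_base (a := []) (b := p) (L := [LE f]) (R := [LG (gone X f)])).
           ++ reflexivity.
           ++ reflexivity.
           ++ apply br_vertex; auto.
           ++ apply walk_nil'; auto.
           ++ apply walk_E'. auto. rewrite Hff. apply walk_nil'; auto.
           ++ apply walk_G'. rewrite gone_idx; auto. apply walk_nil'; auto.
           ++ eauto.
        -- eapply (peq_ctx_base (a := []) (b := p) (L := [LG (gone X f)]) (R := [])).
           ++ reflexivity.
           ++ reflexivity.
           ++ apply br_one.
           ++ apply walk_nil'; auto.
           ++ apply walk_G'. rewrite gone_idx; auto. apply walk_nil'; auto.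
           ++ apply walk_nil'; auto.
           ++ eauto.
      * apply inS_intro; auto. rewrite H1. unfold isV in Hf. rewrite Hf. auto.
    + destruct (pushE_cases HLF (t := (q, c)) (conj Hv Hq) Hf (eq_sym H1)) as ([g bb] & Hd & ->).
      destruct Hd as ((D1 & D2 & D3) & D4). simpl in *. unfold fib_map in D4; simpl in D4.
      set (e := bidx B bb) in *.
      assert (Hc : bidx B c = gminus _ e) by congruence.
      rewrite Hc, lam_minus in D1. rewrite Hc in Hv. rewrite Hc, lam_minus in Hq.
      assert (He : ~ isV e). { intro H. apply Hf. rewrite <- D2. apply rho_isV; auto. }
      assert (In0 : inS B dag star (q ++ [LG g; LE (lam B e); LE (gbar _ (lam B e))], bdown B bb, LE f :: p)).
      { apply inS_intro.
        - rewrite bdown_idx. apply isV_minusG.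
        - wk; unfold e; fin.
        - rewrite bdown_idx, rho_minus. fold e. rewrite D2. apply walk_E'; auto. }
      apply rst_trans with (q ++ [LG g], bdown B bb, LE f :: p).
      { apply rst_sym, rst_step; left. rewrite <- D4. apply ts_l.
        - rewrite bdown_idx, lam_minus. auto.
        - apply inS_intro.
          + rewrite bdown_idx. apply isV_minusG.
          + wk; unfold e; fin.
          + rewrite bdown_idx, rho_minus. fold e. rewrite D2. apply walk_E'; auto. }
      apply rst_trans with (q ++ [LG g; LE (lam B e); LE (gbar _ (lam B e))], bdown B bb, LE f :: p).
      { apply rst_step; left. apply ts_q; auto.
        - apply inS_intro.
          + rewrite bdown_idx. apply isV_minusG.
          + wk; unfold e; fin.
          + rewrite bdown_idx, rho_minus. fold e. rewrite D2. apply walk_E'; auto.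
        - apply peq_sym. eapply (peq_ctx_base (a := q ++ [LG g]) (b := []) (L := [LE (lam B e); LE (gbar _ (lam B e))]) (R := [])).
          + rewrite <- app_assoc; reflexivity.
          + rewrite <- app_assoc; reflexivity.
          + apply br_inv.
          + wk; unfold e; fin.
          + wk; unfold e; fin.
          + wk; unfold e; fin.
          + wk; unfold e; fin. }
      assert (Hnv : ~ isV (bidx B (bflip B bb))).
      { rewrite bflip_idx. intro H. apply He. apply isV_bar_inv_G; auto. }
      assert (In1 : inS B dag star ((q ++ [LG g; LE (lam B e)]), bdown B (bflip B bb), p)).
      { apply inS_intro.
        - rewrite bdown_idx. apply isV_minusG.
        - wk; unfold e; fin.
        - rewrite bdown_idx, bflip_idx, rho_minus, rho_bar. fold e. rewrite D2. auto. }
      assert (In2 : inS B dag star ((q ++ [LG g; LE (lam B e)]) ++ [LE (lam B (bidx B (bflip B bb)))],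
                                    bplus B (bflip B bb), LE (gbar _ (rho B (bidx B (bflip B bb)))) :: p)).
      { rewrite bflip_idx, lam_bar, rho_bar, gbar_inv. fold e. rewrite D2.
        replace (bplus B (bflip B bb)) with (bdown B bb) by (unfold bplus; rewrite bflip_inv; auto).
        rewrite <- app_assoc. exact In0. }
      pose proof (ss_edge (B := B) (dag := dag) (star := star) (q := q ++ [LG g; LE (lam B e)]) (p := p) (bflip B bb) Hnv In1 In2) as HS.
      apply rst_sym, rst_step; right.
      rewrite bflip_idx, lam_bar, rho_bar, gbar_inv in HS. fold e in HS. rewrite D2 in HS.
      replace (bplus B (bflip B bb)) with (bdown B bb) in HS by (unfold bplus; rewrite bflip_inv; auto).
      rewrite <- app_assoc in HS. exact HS.
  - apply walk_one_G in W1. destruct W1 as [H1 ->]. simpl.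
    apply rst_sym, rst_step; left. apply ts_r; auto.
    apply inS_intro; rewrite ?ract_idx; auto. congruence.
Qed.


Lemma real p t : good t -> walk (pos t) p star -> sim B dag star (t, p) (fold p t, []).
Proof.
  revert t. induction p as [|a p IH]; intros t Hg Hw.
  - apply rst_refl.
  - eapply rst_trans. apply push_sim; eauto.
    change (a :: p) with ([a] ++ p) in Hw.
    destruct (walk_split _ _ Hw) as (w & W1 & W2).
    destruct (push_good HLF Hg W1) as [G1 P1].
    rewrite fold_cons. apply IH; auto. congruence.
Qed.

Lemma E_sim t t' p : E t t' -> good t -> walk (pos t) p star -> sim B dag star (t, p) (t', p).
Proof. intros. apply teq_sim. destruct t, t'. apply E_teq; auto. Qed.

Lemma inSp_elim x p s : inSp B dag star x p s ->
  inS B dag star s /\ exists t, good t /\ pos t = x /\ walk x p star /\ teq B dag star s (t, p).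
Proof.
  intros [Hs (q & b & Hb & Hx & Hin & Ht)]. split; auto. exists (q, b).
  destruct Hin as (A1 & A2 & A3). repeat split; auto. rewrite <- Hx; auto.
Qed.

Lemma inS_of_good t p : good t -> walk (pos t) p star -> inS B dag star (t, p).
Proof. destruct t. intros [A1 A2] A3. apply inS_intro; auto. Qed.

Lemma fold_inv_back x p t : good t -> pos t = x -> walk x p star ->
  E (fold (inv p) (fold p t)) t.
Proof.
  intros Gt Pt Wp. rewrite <- fold_app.
  apply (fold_peq HLF (peq_inv_r Wp)); auto.
  apply walk_app with star; auto. apply walk_inv; auto.
Qed.

Lemma inj x p s s' : inSp B dag star x p s -> inSp B dag star x p s' ->
  sim B dag star s s' -> teq B dag star s s'.
Proof.
  intros H1 H2 Hsim.
  destruct (inSp_elim H1) as [Hs (t & Gt & Pt & Wp & Tt)].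
  destruct (inSp_elim H2) as [Hs' (t' & Gt' & Pt' & _ & Tt')].
  assert (HE : E (fold p t) (fold p t')).
  { change (E (Phi (t, p)) (Phi (t', p))).
    eapply E_trans. apply E_sym. apply (sim_Phi (teq_sim Tt) Hs).
    eapply E_trans. apply (sim_Phi Hsim Hs).
    apply (sim_Phi (teq_sim Tt') Hs'). }
  destruct (fold_good HLF (u := star) Gt ltac:(rewrite Pt; exact Wp)) as [G1 P1].
  assert (HE2 : E t t').
  { eapply E_trans. apply E_sym. apply (fold_inv_back Gt Pt Wp).
    eapply E_trans. 2: apply (fold_inv_back Gt' Pt' Wp).
    apply (fold_E HLF) with x; auto. rewrite P1. apply walk_inv; auto. }
  eapply rst_trans. exact Tt. eapply rst_trans. 2: apply rst_sym; exact Tt'.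
  destruct t, t'. apply E_teq; auto. rewrite Pt; auto.
Qed.

Lemma exist_sim x p p' s : walk x p' star -> inSp B dag star x p s ->
  exists s', inSp B dag star x p' s' /\ sim B dag star s s'.
Proof.
  intros Wp' H1.
  destruct (inSp_elim H1) as [Hs (t & Gt & Pt & Wp & Tt)].
  destruct (fold_good HLF (u := star) Gt ltac:(rewrite Pt; exact Wp)) as [G1 P1].
  set (ts := fold p t) in *.
  assert (Wi : walk star (inv p') x) by (apply walk_inv; auto).
  destruct (fold_good HLF (u := x) G1 ltac:(rewrite P1; exact Wi)) as [G2 P2].
  set (t' := fold (inv p') ts) in *.
  exists (t', p'). split.
  - split. apply inS_of_good; auto. rewrite P2; auto.
    destruct t' as [q' b']. exists q', b'. destruct G2 as [A1 A2]. simpl in *.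
    unfold pos in P2; simpl in P2. repeat split; auto; try rewrite P2; auto. apply rst_refl.
  - eapply rst_trans. apply teq_sim; exact Tt.
    eapply rst_trans. apply real; auto. rewrite Pt; auto.
    eapply rst_trans. 2: { apply rst_sym. apply real; auto. rewrite P2; auto. }
    apply rst_sym. unfold t'. rewrite <- fold_app.
    apply E_sim.
    + apply (fold_peq HLF (v := star) (w := star) (l' := []) (t := ts)); auto.
      * pose proof (peq_inv_r Wi) as HH. rewrite inv_inv in HH. exact HH.
      * apply walk_app with x; auto.
    + destruct (fold_good HLF (u := star) G1 (l := inv p' ++ p') ltac:(rewrite P1; apply walk_app with x; auto)).
      auto.
    + destruct (fold_good HLF (u := star) G1 (l := inv p' ++ p') ltac:(rewrite P1; apply walk_app with x; auto)).
      rewrite H0. apply walk_nil. eapply walk_end; eauto.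
Qed.


Lemma inS_act g s : walk dag g dag -> inS B dag star s -> inS B dag star (act B g s).
Proof.
  destruct s as [[q b] p]. intros Hg (A1 & A2 & A3). simpl. repeat split; auto.
  apply walk_app with dag; auto.
Qed.

Lemma tstep_act g s s' : walk dag g dag -> @tstep Y X B dag star s s' ->
  @tstep Y X B dag star (act B g s) (act B g s').
Proof.
  intros Hg H. pose proof (tstep_inS H) as [I1 I2].
  pose proof (inS_act _ Hg I1) as J1.
  destruct H as [q q' b p H1 H2 H3| q b p p' H1 H2 H3| q h b p Hh H1| q b k p Hk H1]; simpl in *.
  - apply ts_q; auto.
    + apply peq_prefix with (v := dag); auto. destruct H1 as (A1 & A2 & A3). eapply walk_end; eauto.
    + apply (inS_act (q', b, p) Hg H3).
  - apply ts_p; auto. apply (inS_act (q, b, p') Hg H3).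
  - rewrite app_assoc. apply ts_l; auto. rewrite <- app_assoc. auto.
  - apply ts_r; auto.
Qed.

Lemma sim_step_act g s s' : walk dag g dag -> @sim_step Y X B dag star s s' ->
  @sim_step Y X B dag star (act B g s) (act B g s').
Proof.
  intros Hg H. destruct H as [q b p Hz H1 H2]. simpl.
  rewrite app_assoc. apply ss_edge; auto.
  - apply (inS_act (q, bdown B b, p) Hg H1).
  - rewrite <- app_assoc. apply (inS_act (_, _, _) Hg H2).
Qed.

Lemma teq_act g s s' : walk dag g dag -> teq B dag star s s' -> teq B dag star (act B g s) (act B g s').
Proof.
  intros Hg. induction 1; [apply rst_step; apply tstep_act; auto|apply rst_refl|apply rst_sym; auto|eapply rst_trans; eauto].
Qed.

Lemma sim_act g s s' : walk dag g dag -> sim B dag star s s' -> sim B dag star (act B g s) (act B g s').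
Proof.
  intros Hg. induction 1 as [x y [H|H]| | |].
  - apply rst_step; left; apply tstep_act; auto.
  - apply rst_step; right; apply sim_step_act; auto.
  - apply rst_refl.
  - apply rst_sym; auto.
  - eapply rst_trans; eauto.
Qed.

Lemma inSp_act x p g s : walk dag g dag -> inSp B dag star x p s -> inSp B dag star x p (act B g s).
Proof.
  intros Hg [Hs (q & b & Hb & Hx & Hin & Ht)]. split. apply inS_act; auto.
  exists (g ++ q), b. split; [auto|]. split; [auto|]. split.
  - apply (inS_act (q, b, p) Hg Hin).
  - apply (teq_act (s' := (q, b, p)) Hg Ht).
Qed.

End Main.

Unset Implicit Arguments.

Theorem mainTheorem4 (Y X : GraphOfGroups) (B : GraphOfBisets Y X) :
  left_fibrant B ->
  forall (dag : ggr Y) (star : ggr X), isV dag -> isV star ->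
  forall (x : ggr X) (p1 p2 : list (letter X)),
    isV x -> walk x p1 star -> walk x p2 star ->
    (forall s1, inSp B dag star x p1 s1 ->
       exists s2, inSp B dag star x p2 s2 /\ sim B dag star s1 s2) /\
    (forall s1 s2 s2', inSp B dag star x p1 s1 -> inSp B dag star x p2 s2 ->
       inSp B dag star x p2 s2' -> sim B dag star s1 s2 -> sim B dag star s1 s2' ->
       teq B dag star s2 s2') /\
    (forall s2, inSp B dag star x p2 s2 ->
       exists s1, inSp B dag star x p1 s1 /\ sim B dag star s1 s2) /\
    (forall s1 s1' s2, inSp B dag star x p1 s1 -> inSp B dag star x p1 s1' ->
       inSp B dag star x p2 s2 -> sim B dag star s1 s2 -> sim B dag star s1' s2 ->
       teq B dag star s1 s1') /\
    (forall (g : list (letter Y)) s1 s2, walk dag g dag ->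
       inSp B dag star x p1 s1 -> inSp B dag star x p2 s2 -> sim B dag star s1 s2 ->
       inSp B dag star x p1 (act B g s1) /\ inSp B dag star x p2 (act B g s2) /\
       sim B dag star (act B g s1) (act B g s2)).
Proof.
  intros HLF dag star Hdag Hstar x p1 p2 Hx W1 W2.
  split; [|split; [|split; [|split]]].
  - intros s1 H. eapply exist_sim; eauto.
  - intros s1 s2 s2' H1 H2 H2' S1 S2. eapply inj; eauto.
    eapply rst_trans. apply rst_sym; eauto. auto.
  - intros s2 H2. destruct (exist_sim HLF W1 H2) as (s1 & Hs1 & S). exists s1; split; auto. apply rst_sym; auto.
  - intros s1 s1' s2 H1 H1' H2 S1 S2. eapply inj; eauto.
    eapply rst_trans. eauto. apply rst_sym; auto.
  - intros g s1 s2 Hg H1 H2 S. split; [|split].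
    + apply inSp_act; auto.
    + apply inSp_act; auto.
    + apply sim_act; auto.
Qed.
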